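(* Let $\Bbbk$ be a commutative ring of global dimension zero and let $C$ be a $\Bbbk$-coalgebra. The Hattori--Stallings corank $[M]\mapsto \mathrm{cotr}_M(\mathrm{id}_M)$ defines a homomorphism of abelian groups \[K_0^c(C)\longrightarrow \mathrm{coHH}_0(C)^*=\mathrm{Hom}_\Bbbk(\mathrm{coHH}_0(C),\Bbbk).\]
   Context: $\Bbbk$ is a finite product of fields; $\otimes=\otimes_\Bbbk$. $C=(C,\Delta,\varepsilon)$ is a coassociative counital $\Bbbk$-coalgebra; Sweedler notation $\Delta(c)=\sum c_{(1)}\otimes c_{(2)}$, and $\tau$ is the swap. $\mathrm{coHH}_0(C)$ is the kernel of $\Delta-\tau\circ\Delta\colon C\to C\otimes C$. A left $C$-comodule $M$ is finitely cogenerated if there is a $C$-colinear monomorphism $M\hookrightarrow C^{\oplus n}$ for some $n\ge0$; it is injective in the abelian category of left $C$-comodules. $K_0^c(C)$ is the group completion of the commutative monoid (under $\oplus$) of isomorphism classes of finitely cogenerated injective left $C$-comodules. Hattori--Stallings cotrace: for such $M$ choose a $C$-colinear monomorphism $i\colon M\to C^{\oplus n}$ and a $C$-colinear retraction $s\colon C^{\oplus n}\to M$. For a $C$-colinear $f\colon M\to M$, the $C$-colinear endomorphism $i\circ f\circ s$ of the cofree comodule $C^{\oplus n}=C\otimes\Bbbk^n$ corresponds, via ${}_C\mathrm{End}(C\otimes \Bbbk^n)\cong\mathrm{Hom}_\Bbbk(C\otimes\Bbbk^n,\Bbbk^n)\cong\mathrm{Hom}_\Bbbk(C,\mathcal M_n(\Bbbk))$,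 to a $\Bbbk$-linear map $c\mapsto f_c$. Define $\mathrm{cotr}_M(f)\in\mathrm{coHH}_0(C)^*$ by $\mathrm{cotr}_M(f)(c)=\sum\varepsilon(c_{(1)})\,\mathrm{tr}(f_{c_{(2)}})$ for $c\in\mathrm{coHH}_0(C)$. The corank of $M$ is $\mathrm{cotr}_M(\mathrm{id}_M)$. *)

(* Defs.v *)
From mathcomp Require Import all_boot all_algebra.
Set Implicit Arguments. Unset Strict Implicit. Unset Printing Implicit Defensive.
Import GRing.Theory.
Local Open Scope ring_scope.

Definition lin (R : pzRingType) (U V : lmodType R) (f : U -> V) : Prop :=
  forall (a : R) (u v : U), f (a *: u + v) = a *: f u + f v.

Definition lin_scalar (R : pzRingType) (U : lmodType R) (f : U -> R) : Prop :=
  forall (a : R) (u v : U), f (a *: u + v) = a * f u + f v.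

Definition projective_mod (R : pzRingType) (P : lmodType R) : Prop :=
  forall (A B : lmodType R) (g : A -> B) (h : P -> B),
    lin g -> lin h -> (forall b, exists a, g a = b) ->
    exists k : P -> A, lin k /\ forall x, g (k x) = h x.

Definition global_dim_zero (R : pzRingType) : Prop :=
  forall P : lmodType R, projective_mod P.

(* Tensor products.  An element of U (x)_R V is represented by a finite list *)
(* of simple tensors [:: (u1,v1); ...] (meaning sum_i u_i (x) v_i); two      *)
(* lists denote the same tensor iff they agree under every R-bilinear map    *)
(* (universal property of the tensor product).  Same for triple tensors.     *)
Definition bilin (R : pzRingType) (U V W : lmodType R) (b : U -> V -> W) :=
  (forall v, lin (b^~ v)) /\ (forall u, lin (b u)).

Definition trilin (R : pzRingType) (U V X W : lmodType R)
  (b : U -> V -> X -> W) :=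
  (forall v x, lin (fun u => b u v x)) /\ (forall u x, lin (fun v => b u v x))
  /\ (forall u v, lin (b u v)).

Definition teq2 (R : pzRingType) (U V : lmodType R) (t t' : seq (U * V)) :=
  forall (W : lmodType R) (b : U -> V -> W), bilin b ->
    \sum_(p <- t) b p.1 p.2 = \sum_(p <- t') b p.1 p.2.

Definition teq3 (R : pzRingType) (U V X : lmodType R)
  (t t' : seq (U * V * X)) :=
  forall (W : lmodType R) (b : U -> V -> X -> W), trilin b ->
    \sum_(p <- t) b p.1.1 p.1.2 p.2 = \sum_(p <- t') b p.1.1 p.1.2 p.2.

Definition tscale (R : pzRingType) (U V : lmodType R) (a : R)
  (t : seq (U * V)) : seq (U * V) := [seq (a *: p.1, p.2) | p <- t].

Definition is_coalgebra (R : comPzRingType) (C : lmodType R)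
  (Delta : C -> seq (C * C)) (eps : C -> R) : Prop :=
  [/\
      forall a x y, teq2 (Delta (a *: x + y)) (tscale a (Delta x) ++ Delta y),
      lin_scalar eps,
      (* coassociativity: (Delta (x) id) Delta = (id (x) Delta) Delta *)
      forall c, teq3 [seq (q.1, q.2, p.2) | p <- Delta c, q <- Delta p.1]
                     [seq (p.1, q.1, q.2) | p <- Delta c, q <- Delta p.2],
      forall c, \sum_(p <- Delta c) eps p.1 *: p.2 = c
    & forall c, \sum_(p <- Delta c) eps p.2 *: p.1 = c].

(* coHH_0(C) = ker (Delta - tau o Delta) *)
Definition coHH0 (R : comPzRingType) (C : lmodType R)
  (Delta : C -> seq (C * C)) (c : C) : Prop :=
  teq2 (Delta c) [seq (p.2, p.1) | p <- Delta c].

Definition is_comodule (R : comPzRingType) (C : lmodType R)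
  (Delta : C -> seq (C * C)) (eps : C -> R)
  (M : lmodType R) (rho : M -> seq (C * M)) : Prop :=
  [/\ forall a x y, teq2 (rho (a *: x + y)) (tscale a (rho x) ++ rho y),
      (* (Delta (x) id) rho = (id (x) rho) rho *)
      forall m, teq3 [seq (q.1, q.2, p.2) | p <- rho m, q <- Delta p.1]
                     [seq (p.1, q.1, q.2) | p <- rho m, q <- rho p.2]
    & forall m, \sum_(p <- rho m) eps p.1 *: p.2 = m].

Definition colinear (R : comPzRingType) (C : lmodType R)
  (M N : lmodType R) (rhoM : M -> seq (C * M)) (rhoN : N -> seq (C * N))
  (f : M -> N) : Prop :=
  lin f /\ forall m, teq2 [seq (p.1, f p.2) | p <- rhoM m] (rhoN (f m)).

Definition injective_comodule (R : comPzRingType) (C : lmodType R)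
  (Delta : C -> seq (C * C)) (eps : C -> R)
  (M : lmodType R) (rho : M -> seq (C * M)) : Prop :=
  forall (A B : lmodType R) (rhoA : A -> seq (C * A)) (rhoB : B -> seq (C * B))
         (g : A -> B) (h : A -> M),
    is_comodule Delta eps rhoA -> is_comodule Delta eps rhoB ->
    colinear rhoA rhoB g -> injective g -> colinear rhoA rho h ->
    exists k : B -> M, colinear rhoB rho k /\ forall a, k (g a) = h a.

(* The cofree comodule C^{(+)n} = C (x) k^n, carrier {ffun 'I_n -> C}. *)
Definition ffun_at (R : pzRingType) (C : lmodType R) (n : nat) (l : 'I_n)
  (x : C) : {ffun 'I_n -> C} := [ffun j => if j == l then x else 0].

Definition rho_cofree (R : comPzRingType) (C : lmodType R)
  (Delta : C -> seq (C * C)) (n : nat) (v : {ffun 'I_n -> C}) :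
  seq (C * {ffun 'I_n -> C}) :=
  flatten [seq [seq (p.1, ffun_at l p.2) | p <- Delta (v l)] | l <- enum 'I_n].

Definition finitely_cogenerated (R : comPzRingType) (C : lmodType R)
  (Delta : C -> seq (C * C)) (M : lmodType R) (rho : M -> seq (C * M)) :=
  exists n (i : M -> {ffun 'I_n -> C}),
    colinear rho (@rho_cofree R C Delta n) i /\ injective i.

Definition cogen_data (R : comPzRingType) (C : lmodType R)
  (Delta : C -> seq (C * C)) (M : lmodType R) (rho : M -> seq (C * M))
  (n : nat) (i : M -> {ffun 'I_n -> C}) (s : {ffun 'I_n -> C} -> M) :=
  [/\ colinear rho (@rho_cofree R C Delta n) i, injective i,
      colinear (@rho_cofree R C Delta n) rho s & forall m, s (i m) = m].

(* Hattori--Stallings cotrace.  For g := i o f o s, the matrix f_c has     *)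
(* (j,l)-entry eps ((g (c e_l)) j), so tr f_c = sum_l eps ((g (c e_l)) l);  *)
(* cotr_M(f)(c) = sum eps(c_(1)) tr(f_(c_(2))).                             *)
Definition mx_trace_at (R : comPzRingType) (C : lmodType R) (eps : C -> R)
  (n : nat) (g : {ffun 'I_n -> C} -> {ffun 'I_n -> C}) (c : C) : R :=
  \sum_(l < n) eps (g (ffun_at l c) l).

Definition cotr (R : comPzRingType) (C : lmodType R)
  (Delta : C -> seq (C * C)) (eps : C -> R) (M : lmodType R)
  (n : nat) (i : M -> {ffun 'I_n -> C}) (s : {ffun 'I_n -> C} -> M)
  (f : M -> M) (c : C) : R :=
  \sum_(p <- Delta c) eps p.1 * mx_trace_at eps (fun v => i (f (s v))) p.2.

Definition corank (R : comPzRingType) (C : lmodType R)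
  (Delta : C -> seq (C * C)) (eps : C -> R) (M : lmodType R)
  (n : nat) (i : M -> {ffun 'I_n -> C}) (s : {ffun 'I_n -> C} -> M) (c : C) :=
  cotr Delta eps i s id c.

Definition rho_sum (R : comPzRingType) (C : lmodType R) (M N : lmodType R)
  (rhoM : M -> seq (C * M)) (rhoN : N -> seq (C * N)) (x : M * N) :
  seq (C * (M * N)) :=
  [seq (p.1, (p.2, 0)) | p <- rhoM x.1] ++ [seq (p.1, (0, p.2)) | p <- rhoN x.2].

Definition fcinj (R : comPzRingType) (C : lmodType R)
  (Delta : C -> seq (C * C)) (eps : C -> R)
  (M : lmodType R) (rho : M -> seq (C * M)) : Prop :=
  [/\ is_comodule Delta eps rho, finitely_cogenerated Delta rho
    & injective_comodule Delta eps rho].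

(* Main.v *)
Require Import Defs.
From mathcomp Require Import all_boot all_algebra.
Set Implicit Arguments. Unset Strict Implicit. Unset Printing Implicit Defensive.
Import GRing.Theory.
Local Open Scope ring_scope.

Lemma linS0 (R : pzRingType) (U : lmodType R) (f : U -> R) :
  lin_scalar f -> f 0 = 0.
Proof.
move=> hf; have := hf 1 0 0; rewrite scaler0 add0r mul1r => E.
by apply: (addrI (f 0)); rewrite addr0 -E.
Qed.

Lemma linSD (R : pzRingType) (U : lmodType R) (f : U -> R) :
  lin_scalar f -> forall u v, f (u + v) = f u + f v.
Proof. by move=> hf u v; rewrite -[u]scale1r hf mul1r scale1r. Qed.

Lemma linSZ (R : pzRingType) (U : lmodType R) (f : U -> R) :
  lin_scalar f -> forall a u, f (a *: u) = a * f u.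
Proof. by move=> hf a u; rewrite -[a *: u]addr0 hf linS0 // addr0. Qed.

Lemma linS_sum (R : pzRingType) (U : lmodType R) (f : U -> R) :
  lin_scalar f -> forall (I : Type) (r : seq I) (P : pred I) (F : I -> U),
  f (\sum_(i <- r | P i) F i) = \sum_(i <- r | P i) f (F i).
Proof. by move=> hf I r P F; apply: (big_morph f (linSD hf) (linS0 hf)). Qed.

Lemma lin0 (R : pzRingType) (U V : lmodType R) (f : U -> V) :
  lin f -> f 0 = 0.
Proof.
move=> hf; have := hf 1 0 0; rewrite scaler0 add0r scale1r => E.
by apply: (addrI (f 0)); rewrite addr0 -E.
Qed.

Lemma linD (R : pzRingType) (U V : lmodType R) (f : U -> V) :
  lin f -> forall u v, f (u + v) = f u + f v.
Proof. by move=> hf u v; rewrite -[u]scale1r hf !scale1r. Qed.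

Lemma linZ (R : pzRingType) (U V : lmodType R) (f : U -> V) :
  lin f -> forall a u, f (a *: u) = a *: f u.
Proof. by move=> hf a u; rewrite -[a *: u]addr0 hf lin0 // addr0. Qed.

Lemma lin_comp (R : pzRingType) (U V W : lmodType R) (f : U -> V) (g : V -> W) :
  lin f -> lin g -> lin (fun x => g (f x)).
Proof. by move=> hf hg a u v; rewrite hf hg. Qed.

Lemma linS_comp (R : pzRingType) (U V : lmodType R) (f : U -> V) (g : V -> R) :
  lin f -> lin_scalar g -> lin_scalar (fun x => g (f x)).
Proof. by move=> hf hg a u v; rewrite hf hg. Qed.

Lemma lin_ffun_at (R : pzRingType) (C : lmodType R) n (l : 'I_n) :
  lin (@ffun_at R C n l).
Proof.
move=> a u v; apply/ffunP => j; rewrite !ffunE.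
by case: (j == l); rewrite ?scaler0 ?addr0.
Qed.

Lemma lin_eval (R : pzRingType) (C : lmodType R) n (l : 'I_n) :
  lin (fun v : {ffun 'I_n -> C} => v l).
Proof. by move=> a u v; rewrite !ffunE. Qed.

Lemma linS_entry (R : pzRingType) (C : lmodType R) (eps : C -> R) n m
  (g : {ffun 'I_n -> C} -> {ffun 'I_m -> C}) (l : 'I_n) (j : 'I_m) :
  lin_scalar eps -> lin g -> lin_scalar (fun x => eps (g (ffun_at l x) j)).
Proof.
move=> he hg a u v /=; by rewrite lin_ffun_at hg !ffunE he.
Qed.

Lemma teq2_map2 (R : pzRingType) (U V V' : lmodType R) (f : V -> V')
  (t t' : seq (U * V)) : lin f -> teq2 t t' ->
  teq2 [seq (p.1, f p.2) | p <- t] [seq (p.1, f p.2) | p <- t'].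
Proof.
move=> hf ht W b [b1 b2]; rewrite !big_map /=.
apply: (ht W (fun x y => b x (f y))); split.
  by move=> v; apply: b1.
by move=> u a x y; rewrite hf b2.
Qed.

Lemma rho_zero (R : pzRingType) (X Y Z : lmodType R) (rho : X -> seq (Y * Z)) :
  (forall a x y, teq2 (rho (a *: x + y)) (tscale a (rho x) ++ rho y)) ->
  forall (W : lmodType R) (b : Y -> Z -> W), bilin b ->
  \sum_(p <- rho 0) b p.1 p.2 = 0.
Proof.
move=> H W b hb; have := H 1 0 0 W b hb.
rewrite scaler0 add0r big_cat /= /tscale big_map /=.
have -> : \sum_(j <- rho 0) b (1 *: j.1) j.2 = \sum_(j <- rho 0) b j.1 j.2.
  by apply: eq_bigr => j _; rewrite scale1r.
move=> E.
 by apply: (addrI (\sum_(p <- rho 0) b p.1 p.2)); rewrite addr0 -E.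
Qed.

Lemma sum_rho_cofree (R : comPzRingType) (C : lmodType R) (Delta : C -> seq (C * C))
  n (W : zmodType) (F : C -> {ffun 'I_n -> C} -> W) v :
  \sum_(p <- rho_cofree Delta v) F p.1 p.2 =
  \sum_(l < n) \sum_(q <- Delta (v l)) F q.1 (ffun_at l q.2).
Proof.
rewrite /rho_cofree big_flatten /= big_map big_enum /=.
by apply: eq_bigr => l _; rewrite big_map.
Qed.

Lemma bilin_sc (R : comPzRingType) (C V : lmodType R) (F : V -> R) :
  lin_scalar F -> bilin (fun (x : C) (y : V) => F y *: x).
Proof.
move=> hF; split.
  by move=> v a x y; rewrite scalerDr !scalerA mulrC.
by move=> x a u v; rewrite hF scalerDl scalerA.
Qed.

Lemma bilin_mul (R : comPzRingType) (C : lmodType R) (F G : C -> R) :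
  lin_scalar F -> lin_scalar G ->
  bilin (fun (x y : C) => (F y * G x : R^o)).
Proof.
move=> hF hG; split.
  move=> v a x y /=; rewrite hG mulrDr mulrCA; by [].
move=> x a u v /=; rewrite hF mulrDl -mulrA; by [].
Qed.

Lemma colin_expand (R : comPzRingType) (C : lmodType R) (Delta : C -> seq (C * C))
  (eps : C -> R) (hC : is_coalgebra Delta eps) n m
  (g : {ffun 'I_n -> C} -> {ffun 'I_m -> C}) :
  colinear (@rho_cofree R C Delta n) (@rho_cofree R C Delta m) g ->
  forall v j, g v j = \sum_(l < n) \sum_(q <- Delta (v l)) eps (g (ffun_at l q.2) j) *: q.1.
Proof.
case: hC => hD he _ hl hr [hg hcol] v j.
have := hcol v C (fun x (w : {ffun 'I_m -> C}) => eps (w j) *: x)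
  (@bilin_sc _ _ _ _ (linS_comp (lin_eval j) he)).
rewrite big_map /= (sum_rho_cofree Delta (fun x w => eps (g w j) *: x)) (sum_rho_cofree Delta (fun x (w : {ffun _ -> C}) => eps (w j) *: x)) => ->.
rewrite (bigD1 j) //= [X in _ + X]big1 ?addr0.
  by under eq_bigr do rewrite ffunE eqxx; rewrite hr.
move=> i /negbTE ij; apply: big1 => q _; rewrite ffunE eq_sym ij linS0 // scale0r //.
Qed.

Lemma colin_expand1 (R : comPzRingType) (C : lmodType R) (Delta : C -> seq (C * C))
  (eps : C -> R) (hC : is_coalgebra Delta eps) n m
  (g : {ffun 'I_n -> C} -> {ffun 'I_m -> C}) :
  colinear (@rho_cofree R C Delta n) (@rho_cofree R C Delta m) g ->
  forall l c j, g (ffun_at l c) j =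
     \sum_(q <- Delta c) eps (g (ffun_at l q.2) j) *: q.1.
Proof.
move=> hg l c j; rewrite (colin_expand hC hg) (bigD1 l) //= [X in _ + X]big1 ?addr0.
  by rewrite ffunE eqxx.
move=> i /negbTE il; rewrite ffunE il.
case: hC => hD he _ _ _.
exact: (rho_zero hD (@bilin_sc _ _ _ _ (linS_entry i j he hg.1))).
Qed.

Lemma trace_entry (R : comPzRingType) (C : lmodType R) (Delta : C -> seq (C * C))
  (eps : C -> R) (hC : is_coalgebra Delta eps) n m
  (g : {ffun 'I_n -> C} -> {ffun 'I_m -> C}) (h : {ffun 'I_m -> C} -> {ffun 'I_n -> C}) :
  colinear (@rho_cofree R C Delta n) (@rho_cofree R C Delta m) g ->
  colinear (@rho_cofree R C Delta m) (@rho_cofree R C Delta n) h ->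
  forall l c, eps (h (g (ffun_at l c)) l) =
    \sum_(j < m) \sum_(q <- Delta c) eps (g (ffun_at l q.2) j) * eps (h (ffun_at j q.1) l).
Proof.
move=> hg hh l c.
have he : lin_scalar eps by case: hC.
have hl : forall c, \sum_(p <- Delta c) eps p.1 *: p.2 = c by case: hC.
rewrite (colin_expand hC hh) (linS_sum he); apply: eq_bigr => j _.
rewrite (linS_sum he).
under eq_bigr do rewrite (linSZ he).
set w := g _ j.
have K : forall x, \sum_(q <- Delta x) eps (h (ffun_at j q.2) l) * eps q.1
                 = eps (h (ffun_at j x) l).
  move=> x; rewrite -{2}(hl x) (linS_sum (linS_entry j l he hh.1)).
  by apply: eq_bigr => q _; rewrite (linSZ (linS_entry j l he hh.1)) mulrC.
rewrite K /w (colin_expand1 hC hg) (linS_sum (linS_entry j l he hh.1)).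
by apply: eq_bigr => q _; rewrite (linSZ (linS_entry j l he hh.1)).
Qed.

Lemma trace_swap (R : comPzRingType) (C : lmodType R) (Delta : C -> seq (C * C))
  (eps : C -> R) (hC : is_coalgebra Delta eps) n m
  (g : {ffun 'I_n -> C} -> {ffun 'I_m -> C}) (h : {ffun 'I_m -> C} -> {ffun 'I_n -> C}) :
  colinear (@rho_cofree R C Delta n) (@rho_cofree R C Delta m) g ->
  colinear (@rho_cofree R C Delta m) (@rho_cofree R C Delta n) h ->
  forall c, coHH0 Delta c ->
  \sum_(l < n) eps (h (g (ffun_at l c)) l) = \sum_(j < m) eps (g (h (ffun_at j c)) j).
Proof.
move=> hg hh c hc.
have he : lin_scalar eps by case: hC.
under eq_bigr do rewrite (trace_entry hC hg hh).
under [RHS]eq_bigr do rewrite (trace_entry hC hh hg).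
rewrite [RHS]exchange_big; apply: eq_bigr => l _; apply: eq_bigr => j _.
have := hc (R^o) _ (bilin_mul (linS_entry l j he hg.1) (linS_entry j l he hh.1)).
rewrite big_map /= => ->.
by apply: eq_bigr => q _; rewrite mulrC.
Qed.

Lemma trace_lin (R : comPzRingType) (C : lmodType R) (eps : C -> R) n
  (G : {ffun 'I_n -> C} -> {ffun 'I_n -> C}) :
  lin_scalar eps -> lin G ->
  lin_scalar (fun x => \sum_(l < n) eps (G (ffun_at l x) l)).
Proof.
move=> he hG a u v; rewrite mulr_sumr -big_split /=.
by apply: eq_bigr => l _; rewrite (linS_entry l l he hG).
Qed.

Lemma corank_eq (R : comPzRingType) (C : lmodType R) (Delta : C -> seq (C * C))
  (eps : C -> R) (hC : is_coalgebra Delta eps) (M : lmodType R) n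
  (i : M -> {ffun 'I_n -> C}) (s : {ffun 'I_n -> C} -> M) c :
  lin i -> lin s ->
  corank Delta eps i s c = \sum_(l < n) eps (i (s (ffun_at l c)) l).
Proof.
move=> hi hs; have he : lin_scalar eps by case: hC.
have hl : forall c, \sum_(p <- Delta c) eps p.1 *: p.2 = c by case: hC.
have hT := trace_lin he (lin_comp hs hi).
rewrite /corank /cotr /mx_trace_at /= -{2}(hl c) (linS_sum hT).
by apply: eq_bigr => p _; rewrite (linSZ hT).
Qed.

Lemma colin_comp (R : comPzRingType) (C : lmodType R) (X Y Z : lmodType R)
  (r1 : X -> seq (C * X)) (r2 : Y -> seq (C * Y)) (r3 : Z -> seq (C * Z))
  (f : X -> Y) (g : Y -> Z) :
  colinear r1 r2 f -> colinear r2 r3 g -> colinear r1 r3 (fun x => g (f x)).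
Proof.
move=> [hf cf] [hg cg]; split; first exact: lin_comp.
move=> x W b hb; rewrite -(cg (f x) W b hb).
have := teq2_map2 hg (cf x) hb; rewrite !big_map /= => <-.
by [].
Qed.

Lemma colin_inv (R : comPzRingType) (C : lmodType R) (X Y : lmodType R)
  (r1 : X -> seq (C * X)) (r2 : Y -> seq (C * Y)) (f : X -> Y) (finv : Y -> X) :
  colinear r1 r2 f -> cancel f finv -> cancel finv f -> colinear r2 r1 finv.
Proof.
move=> [hf cf] c1 c2.
have hl : lin finv by move=> a x y; apply: (can_inj c1); rewrite hf !c2.
split => // y W b hb.
have := teq2_map2 hl (cf (finv y)) hb; rewrite c2 !big_map /= => <-.
by apply: eq_bigr => p _; rewrite c1.
Qed.

Lemma fst_colin (R : comPzRingType) (C : lmodType R) (M N : lmodType R)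
  (rhoM : M -> seq (C * M)) (rhoN : N -> seq (C * N)) :
  colinear (rho_sum rhoM rhoN) rhoM (fun x => x.1).
Proof.
split => // x W b hb; rewrite /rho_sum map_cat big_cat !big_map /= [X in _ + X]big1 ?addr0 //.
by move=> p _; exact: (lin0 (hb.2 p.1)).
Qed.

Lemma snd_colin (R : comPzRingType) (C : lmodType R) (M N : lmodType R)
  (rhoM : M -> seq (C * M)) (rhoN : N -> seq (C * N)) :
  colinear (rho_sum rhoM rhoN) rhoN (fun x => x.2).
Proof.
split => // x W b hb; rewrite /rho_sum map_cat big_cat !big_map /= [X in X + _]big1 ?add0r //.
by move=> p _; exact: (lin0 (hb.2 p.1)).
Qed.

Lemma inl_colin (R : comPzRingType) (C : lmodType R) (Delta : C -> seq (C * C))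
  (eps : C -> R) (M N : lmodType R)
  (rhoM : M -> seq (C * M)) (rhoN : N -> seq (C * N)) :
  is_comodule Delta eps rhoN ->
  colinear rhoM (rho_sum rhoM rhoN) (fun m => (m, 0 : N)).
Proof.
case=> hN _ _; split.
  move=> a u v; apply: injective_projections => //=; by rewrite scaler0 addr0.
move=> m W b hb; rewrite /rho_sum big_cat !big_map /=.
rewrite (@rho_zero _ _ _ _ _ hN W (fun x y => b x (0, y))) ?addr0 //.
split; first by move=> v a x y; apply: hb.1.
move=> x a u v; rewrite -hb.2; congr b.
apply: injective_projections => //=; by rewrite scaler0 addr0.
Qed.

Lemma inr_colin (R : comPzRingType) (C : lmodType R) (Delta : C -> seq (C * C))
  (eps : C -> R) (M N : lmodType R)
  (rhoM : M -> seq (C * M)) (rhoN : N -> seq (C * N)) :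
  is_comodule Delta eps rhoM ->
  colinear rhoN (rho_sum rhoM rhoN) (fun m => (0 : M, m)).
Proof.
case=> hM _ _; split.
  move=> a u v; apply: injective_projections => //=; by rewrite scaler0 addr0.
move=> m W b hb; rewrite /rho_sum big_cat !big_map /=.
rewrite (@rho_zero _ _ _ _ _ hM W (fun x y => b x (y, 0))) ?add0r //.
split; first by move=> v a x y; apply: hb.1.
move=> x a u v; rewrite -hb.2; congr b.
apply: injective_projections => //=; by rewrite scaler0 addr0.
Qed.
Unset Implicit Arguments.

Theorem theorem2p14 (R : comPzRingType) (hR : global_dim_zero R)
  (C : lmodType R) (Delta : C -> seq (C * C)) (eps : C -> R)
  (hC : is_coalgebra Delta eps) :
  (forall (M N : lmodType R) (rhoM : M -> seq (C * M)) (rhoN : N -> seq (C * N)),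
     fcinj Delta eps rhoM -> fcinj Delta eps rhoN ->
     forall phi : M -> N, colinear rhoM rhoN phi -> bijective phi ->
     forall (n : nat) (i : M -> {ffun 'I_n -> C}) (s : {ffun 'I_n -> C} -> M)
            (n' : nat) (i' : N -> {ffun 'I_n' -> C}) (s' : {ffun 'I_n' -> C} -> N),
     cogen_data Delta rhoM i s -> cogen_data Delta rhoN i' s' ->
     forall c, coHH0 Delta c -> corank Delta eps i s c = corank Delta eps i' s' c)
  /\
  (forall (M : lmodType R) (rhoM : M -> seq (C * M)),
     fcinj Delta eps rhoM ->
     forall (n : nat) (i : M -> {ffun 'I_n -> C}) (s : {ffun 'I_n -> C} -> M),
     cogen_data Delta rhoM i s ->
     forall (a : R) (c d : C), coHH0 Delta c -> coHH0 Delta d ->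
     corank Delta eps i s (a *: c + d)
       = a * corank Delta eps i s c + corank Delta eps i s d)
  /\
  (forall (M N : lmodType R) (rhoM : M -> seq (C * M)) (rhoN : N -> seq (C * N)),
     fcinj Delta eps rhoM -> fcinj Delta eps rhoN ->
     forall (n : nat) (i : M -> {ffun 'I_n -> C}) (s : {ffun 'I_n -> C} -> M)
            (n' : nat) (i' : N -> {ffun 'I_n' -> C}) (s' : {ffun 'I_n' -> C} -> N)
            (n'' : nat) (i'' : M * N -> {ffun 'I_n'' -> C})
            (s'' : {ffun 'I_n'' -> C} -> M * N),
     cogen_data Delta rhoM i s -> cogen_data Delta rhoN i' s' ->
     cogen_data Delta (rho_sum rhoM rhoN) i'' s'' ->
     forall c, coHH0 Delta c ->
     corank Delta eps i'' s'' c = corank Delta eps i s c + corank Delta eps i' s' c).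
Proof.
have he : lin_scalar eps by case: hC.
split; [|split].
- move=> M N rhoM rhoN hM hN phi hphi [phinv c1 c2] n i s n' i' s'
    [hi _ hs si] [hi' _ hs' si'] c hc.
  rewrite (corank_eq hC _ hi.1 hs.1) (corank_eq hC _ hi'.1 hs'.1).
  have hpi := colin_inv hphi c1 c2.
  have hg := colin_comp (colin_comp hs hphi) hi'.
  have hh := colin_comp (colin_comp hs' hpi) hi.
  have E := trace_swap hC hg hh hc.
  rewrite (eq_bigr (fun l => eps (i (phinv (s' (i' (phi (s (ffun_at l c)))))) l)));
    last by move=> l _; rewrite si' c1.
  rewrite E; apply: eq_bigr => j _; by rewrite si c2.
- move=> M rhoM hM n i s [hi _ hs _] a c d _ _.
  rewrite !(corank_eq hC _ hi.1 hs.1).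
  exact: (trace_lin he (lin_comp hs.1 hi.1)).
- move=> M N rhoM rhoN [hM _ _] [hN _ _] n i s n' i' s' n'' i'' s''
    [hi _ hs si] [hi' _ hs' si'] [hi'' _ hs'' si''] c hc.
  rewrite (corank_eq hC _ hi.1 hs.1) (corank_eq hC _ hi'.1 hs'.1)
          (corank_eq hC _ hi''.1 hs''.1).
  have split2 : forall x : M * N, x = (x.1, 0) + (0, x.2).
    move=> [x y]; apply: injective_projections => /=; by rewrite ?addr0 ?add0r.
  rewrite (eq_bigr (fun l => eps (i'' (((s'' (ffun_at l c)).1, 0)) l)
                          + eps (i'' ((0, (s'' (ffun_at l c)).2)) l))); last first.
    move=> l _; rewrite {1}[s'' _]split2 (linD hi''.1) ffunE (linSD he) //.
  rewrite big_split /=; congr (_ + _).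
  + have hg := colin_comp (colin_comp hs'' (fst_colin rhoM rhoN)) hi.
    have hh := colin_comp (colin_comp hs (inl_colin rhoM hN)) hi''.
    have E := trace_swap hC hg hh hc.
    rewrite (eq_bigr (fun l => eps (i'' (s (i (s'' (ffun_at l c)).1), 0) l)));
      last by move=> l _; rewrite si.
    rewrite E; apply: eq_bigr => j _; by rewrite si''.
  + have hg := colin_comp (colin_comp hs'' (snd_colin rhoM rhoN)) hi'.
    have hh := colin_comp (colin_comp hs' (inr_colin rhoN hM)) hi''.
    have E := trace_swap hC hg hh hc.
    rewrite (eq_bigr (fun l => eps (i'' (0, s' (i' (s'' (ffun_at l c)).2)) l)));
      last by move=> l _; rewrite si'.
    rewrite E; apply: eq_bigr => j _; by rewrite si''.
Qed.
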